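(* There exist absolute constants $C,c>0$ such that the following holds. Let $q$ be a prime power, $B$ a non-degenerate bilinear form on $\mathbb{F}_q^2$, and $\mathcal{A},\mathcal{B},\mathcal{C}\subseteq\mathbb{F}_q^2$ with $|\mathcal{A}|,|\mathcal{B}|,|\mathcal{C}|\ge Cq^{3/2}$. Then the number of triples $(\lambda_1,\lambda_2,\lambda_3)\in(\mathbb{F}_q^* )^3$ for which the system \[ B(\mathbf{a},\mathbf{b})=\lambda_1,\quad B(\mathbf{a},\mathbf{c})=\lambda_2,\quad B(\mathbf{b},\mathbf{c})=\lambda_3,\qquad \mathbf{a}\in\mathcal{A},\ \mathbf{b}\in\mathcal{B},\ \mathbf{c}\in\mathcal{C}, \] has a solution is at least $c\,\frac{\sqrt{|\mathcal{B}||\mathcal{C}|}}{q^2}\,q^3$.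
   Context: $B:\mathbb{F}_q^2\times\mathbb{F}_q^2\to\mathbb{F}_q$ is bilinear and non-degenerate; $\mathbb{F}_q^*=\mathbb{F}_q\setminus\{0\}$. *)

(* Defs.v *)
From HB Require Import structures.
From mathcomp Require Import all_boot all_order all_algebra all_field.
Set Implicit Arguments. Unset Strict Implicit. Unset Printing Implicit Defensive.
Import Order.TTheory GRing.Theory Num.Theory.
Local Open Scope ring_scope.

(* Every bilinear form on F^2 is x, y |-> x M y^T for a unique 2x2 matrix M;
   it is non-degenerate iff M is invertible. *)
Definition bilform (F : fieldType) (M : 'M[F]_2) (x y : 'rV[F]_2) : F :=
  (x *m M *m y^T) 0 0.

Definition bilform_nondeg (F : fieldType) (M : 'M[F]_2) : bool := M \in unitmx.

Definition solvable_triples (F : finFieldType) (M : 'M[F]_2)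
  (A B C : {set 'rV[F]_2}) : {set F * F * F} :=
  [set l : F * F * F | [&& l.1.1 != 0, l.1.2 != 0, l.2 != 0 &
     [exists a in A, exists b in B, exists c in C,
        [&& bilform M a b == l.1.1, bilform M a c == l.1.2 &
            bilform M b c == l.2]]]].

(* Main.v *)
Require Import Defs.
From Stdlib Require Import Lia Ring Arith.
From HB Require Import structures.
From mathcomp Require Import all_boot all_order all_algebra all_field.
Set Implicit Arguments. Unset Strict Implicit. Unset Printing Implicit Defensive.
Import Order.TTheory GRing.Theory Num.Theory.
Local Open Scope ring_scope.



Definition dot (F : fieldType) (g y : 'rV[F]_2) : F := g 0 0 * y 0 0 + g 0 1 * y 0 1.
Definition det2 (F : fieldType) (g h : 'rV[F]_2) : F := g 0 0 * h 0 1 - g 0 1 * h 0 0.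

Lemma row2_eq (F : fieldType) (u v : 'rV[F]_2) : u 0 0 = v 0 0 -> u 0 1 = v 0 1 -> u = v.
Proof.
move=> h0 h1; apply/rowP => j.
case: j => [[|[|//]]] Hj.
- by rewrite (_ : Ordinal Hj = 0) //; apply/val_inj.
- by rewrite (_ : Ordinal Hj = 1) //; apply/val_inj.
Qed.

Lemma dotB (F : fieldType) (g y y' : 'rV[F]_2) : dot g (y - y') = dot g y - dot g y'.
Proof. rewrite /dot !mxE !mulrBr opprD !addrA; congr (_ + _); rewrite -!addrA; congr (_ + _); by rewrite addrC. Qed.

Lemma lift00 : lift ord0 ord0 = 1 :> 'I_2. Proof. exact: val_inj. Qed.

Lemma mulmx2E (F : fieldType) m n (u : 'M[F]_(m,2)) (N : 'M[F]_(2,n)) i j :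
  (u *m N) i j = u i 0 * N 0 j + u i 1 * N 1 j.
Proof. by rewrite mxE !big_ord_recl big_ord0 addr0 lift00. Qed.

Lemma bilformE (F : fieldType) (M : 'M[F]_2) x y : bilform M x y = dot (x *m M) y.
Proof. by rewrite /bilform /dot mulmx2E !mxE. Qed.

Lemma m3 (F : comNzRingType) (a b c : F) : a * b * c = c * b * a.
Proof. by rewrite mulrC [a * b]mulrC mulrA. Qed.

Lemma bilformE' (F : fieldType) (M : 'M[F]_2) x y : bilform M x y = dot (y *m M^T) x.
Proof.
rewrite /bilform /dot !mulmx2E !mxE ?mulmx2E ?mxE.
by rewrite !mulrDl addrACA !(m3 (x 0 _)).
Qed.

Lemma row2_neq0 (F : fieldType) (g : 'rV[F]_2) : g != 0 -> g 0 0 != 0 \/ g 0 1 != 0.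
Proof.
move=> gn0; case: (eqVneq (g 0 0) 0) => h0; last by left.
case: (eqVneq (g 0 1) 0) => h1; last by right.
by move: gn0; rewrite (@row2_eq _ g 0) ?mxE ?eqxx.
Qed.

Lemma line_card (F : finFieldType) (g : 'rV[F]_2) t :
  g != 0 -> (#|[set x | dot g x == t]| <= #|F|)%N.
Proof.
move=> /row2_neq0 [] hg.
- apply: (@leq_card_in _ _ (fun x : 'rV[F]_2 => x 0 1)) => x y.
  rewrite !inE /dot => /eqP hx /eqP hy e.
  apply: row2_eq => //; apply: (mulfI hg); apply: (addIr (g 0 1 * x 0 1)).
  by rewrite hx e hy.
- apply: (@leq_card_in _ _ (fun x : 'rV[F]_2 => x 0 0)) => x y.
  rewrite !inE /dot => /eqP hx /eqP hy e.
  apply: row2_eq => //; apply: (mulfI hg); apply: (addrI (g 0 0 * x 0 0)).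
  by rewrite hx e hy.
Qed.

Lemma inj2 (F : fieldType) (g h w : 'rV[F]_2) :
  det2 g h != 0 -> dot g w = 0 -> dot h w = 0 -> w = 0.
Proof.
rewrite /det2 /dot => hd hg hh.
have e0 : (g 0 0 * h 0 1 - g 0 1 * h 0 0) * w 0 0 = h 0 1 * (g 0 0 * w 0 0 + g 0 1 * w 0 1) - g 0 1 * (h 0 0 * w 0 0 + h 0 1 * w 0 1).
  rewrite !mulrDr !mulrBl opprD addrACA. rewrite !mulrA (mulrC (h 0 1) (g 0 1)) subrr addr0.
  by rewrite (mulrC (h 0 1)).
have e1 : (g 0 0 * h 0 1 - g 0 1 * h 0 0) * w 0 1 = g 0 0 * (h 0 0 * w 0 0 + h 0 1 * w 0 1) - h 0 0 * (g 0 0 * w 0 0 + g 0 1 * w 0 1).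
  rewrite !mulrDr !mulrBl opprD addrACA. rewrite !mulrA (mulrC (g 0 0) (h 0 0)) subrr add0r.
  by rewrite (mulrC (g 0 1)).
apply: row2_eq; rewrite mxE.
  by apply/eqP; move: e0; rewrite hg hh !mulr0 subrr => /eqP; rewrite mulf_eq0 (negbTE hd).
by apply/eqP; move: e1; rewrite hg hh !mulr0 subrr => /eqP; rewrite mulf_eq0 (negbTE hd).
Qed.

Lemma det0_dot (F : fieldType) (g h y : 'rV[F]_2) :
  det2 g h = 0 -> h != 0 -> dot h y = 0 -> dot g y = 0.
Proof.
rewrite /det2 /dot => /eqP; rewrite subr_eq0 => /eqP hd hn hy.
case/row2_neq0: hn => hn.
- apply: (mulfI hn); rewrite mulr0 -[RHS](mulr0 (g 0 0)) -hy !mulrDr !mulrA.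
  by rewrite (mulrC (h 0 0) (g 0 0)) (mulrC (h 0 0) (g 0 1)) hd.
- apply: (mulfI hn); rewrite mulr0 -[RHS](mulr0 (g 0 1)) -hy !mulrDr !mulrA.
  by rewrite (mulrC (h 0 1) (g 0 0)) (mulrC (h 0 1) (g 0 1)) -hd.
Qed.

Lemma le1 (F : finFieldType) (g h : 'rV[F]_2) t :
  t != 0 -> h != 0 -> (#|[set y | (dot g y == t) && (dot h y == 0%R)]| <= 1)%N.
Proof.
move=> tn0 hn0.
apply: leq_trans (_ : _ <= #|{: unit}|)%N _; last by rewrite card_unit.
apply: (@leq_card_in _ _ (fun _ => tt)) => y y'.
rewrite !inE => /andP[/eqP gy /eqP hy] /andP[/eqP gy' /eqP hy'] _.
case: (eqVneq (det2 g h) 0) => hd.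
  by move: tn0; rewrite -gy (det0_dot hd hn0 hy) eqxx.
apply/eqP; rewrite -subr_eq0; apply/eqP; apply: (inj2 hd).
  by rewrite dotB gy gy' subrr.
by rewrite dotB hy hy' subrr.
Qed.

Definition hh (F : fieldType) (p : 'rV[F]_2) (N : 'M[F]_2) : 'rV[F]_2 :=
  \row_i (p 0 0 * N i 1 - p 0 1 * N i 0).

Lemma det2_hh (F : fieldType) (p y : 'rV[F]_2) (N : 'M[F]_2) :
  det2 p (y *m N) = dot (hh p N) y.
Proof.
rewrite /det2 /dot /hh !mulmx2E !mxE !mulrDr !mulrBl opprD addrACA.
by rewrite -!mulrA !(mulrC (N _ _)).
Qed.

Lemma hh_neq0 (F : fieldType) (p : 'rV[F]_2) (N : 'M[F]_2) :
  N \in unitmx -> p != 0 -> hh p N != 0.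
Proof.
move=> Nu pn0; apply/eqP => h0.
pose v : 'rV[F]_2 := \row_j (if j == 0 then - p 0 1 else p 0 0).
have e : hh p N = v *m N^T.
  by apply: row2_eq; rewrite mulmx2E !mxE /= ?mulNr addrC.
have : v = 0.
  have NTu : N^T \in unitmx by rewrite unitmx_tr.
  by rewrite -(mulmxK NTu v) -e h0 mul0mx.
move/rowP => hv; move: pn0; rewrite (@row2_eq _ p 0) ?eqxx //.
  by move: (hv 1); rewrite !mxE /=.
by move: (hv 0); rewrite !mxE /= => /eqP; rewrite oppr_eq0 => /eqP.
Qed.



Lemma CS (R : realFieldType) (I : finType) (A : {pred I}) (f : I -> R) :
  (\sum_(i in A) f i) ^+ 2 <= #|A|%:R * \sum_(i in A) f i ^+ 2.
Proof.
set S := \sum_(i in A) f i; set Q := \sum_(i in A) f i ^+ 2.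
have inner i : \sum_(j in A) (f i - f j) ^+ 2 = #|A|%:R * f i ^+ 2 - (f i * S) *+ 2 + Q.
  rewrite (eq_bigr _ (fun j _ => sqrrB (f i) (f j))) big_split /= big_split /= sumr_const.
  by rewrite sumrN sumrMnl -mulr_sumr mulr_natl.
have h : 0 <= \sum_(i in A) \sum_(j in A) (f i - f j) ^+ 2.
  by apply: sumr_ge0 => i _; apply: sumr_ge0 => j _; apply: sqr_ge0.
rewrite (eq_bigr _ (fun i _ => inner i)) big_split /= big_split /= in h.
rewrite sumrN sumrMnl -mulr_suml -mulr_sumr sumr_const -expr2 -/S -/Q !mulr_natl in h.
rewrite -subr_ge0 -(pmulrn_lge0 _ (isT : (0 < 2)%N)).
by rewrite mulrnBl mulr2n !mulr_natl addrAC.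
Qed.

Lemma sum_ind (R : numDomainType) (S : finType) (a : S) :
  \sum_t ((a == t)%:R : R) = 1.
Proof. by rewrite (bigD1 a) //= eqxx big1 ?addr0 // => t /negbTE; rewrite eq_sym => ->. Qed.

Lemma sum_ind2 (R : numDomainType) (S : finType) (a b : S) :
  \sum_t ((a == t)%:R * (b == t)%:R : R) = (a == b)%:R.
Proof.
rewrite (bigD1 a) //= eqxx mul1r big1 ?addr0; first by rewrite eq_sym.
by move=> t /negbTE; rewrite eq_sym => ->; rewrite mul0r.
Qed.

Lemma sum_card (R : numDomainType) (T : finType) (p : pred T) :
  \sum_x ((p x)%:R : R) = #|[set x | p x]|%:R.
Proof.
rewrite -sum1_card natr_sum [RHS]big_mkcond /=; apply: eq_bigr => x _; rewrite inE.
by case: (p x).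
Qed.

Lemma variance (R : realFieldType) (T U S : finType) (v : T -> U -> S)
   (X : {set T}) (Y : {set U}) (K : nat) :
  (forall y y', y != y' -> #|[set x | v x y == v x y']| <= K)%N ->
  \sum_t (#|S|%:R * (\sum_(x in X) \sum_(y in Y) ((v x y == t)%:R : R)) - #|X|%:R * #|Y|%:R) ^+ 2
   <= #|X|%:R * (#|S|%:R ^+ 2 * (#|Y|%:R * #|T|%:R + #|Y|%:R ^+ 2 * K%:R)
                 - #|T|%:R * #|S|%:R * #|Y|%:R ^+ 2).
Proof.
move=> hK.
set Q : R := #|S|%:R; set P : R := #|T|%:R; set k : R := #|X|%:R; set l : R := #|Y|%:R.
set n := fun x t => \sum_(y in Y) ((v x y == t)%:R : R).
have sa t : Q * (\sum_(x in X) n x t) - k * l = \sum_(x in X) (Q * n x t - l).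
  by rewrite big_split /= sumrN sumr_const mulr_sumr -mulr_natl.
have nsum x : \sum_t n x t = l.
  rewrite /n exchange_big /=. 
  by rewrite (eq_bigr (fun _ => 1)) ?sumr_const // => y _; apply: sum_ind.
have sd x : \sum_t (Q * n x t - l) ^+ 2 = Q ^+ 2 * \sum_t n x t ^+ 2 - Q * l ^+ 2.
  rewrite (eq_bigr _ (fun t _ => sqrrB _ _)) big_split /= big_split /= sumr_const.
  rewrite sumrN (eq_bigr _ (fun t _ => exprMn _ _ _)) -mulr_sumr.
  rewrite sumrMnl -mulr_suml -mulr_sumr nsum -mulrA -expr2 -[l ^+ 2 *+ _]mulr_natl.
  by rewrite mulr2n opprD addrA subrK.
have se x : \sum_t n x t ^+ 2 = \sum_(y in Y) \sum_(y' in Y) ((v x y == v x y')%:R : R).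
  rewrite /n (eq_bigr (fun t => \sum_(y in Y) \sum_(y' in Y) ((v x y == t)%:R * (v x y' == t)%:R))).
    rewrite exchange_big /=; apply: eq_bigr => y _; rewrite exchange_big /=.
    by apply: eq_bigr => y' _; rewrite sum_ind2.
  by move=> t _; rewrite expr2 mulr_suml; apply: eq_bigr => y _; rewrite mulr_sumr.
have sf : \sum_x \sum_(y in Y) \sum_(y' in Y) ((v x y == v x y')%:R : R) <= l * P + l ^+ 2 * K%:R.
  rewrite exchange_big /= (eq_bigr (fun y => \sum_(y' in Y) #|[set x | v x y == v x y']|%:R)); last first.
    by move=> y _; rewrite exchange_big /=; apply: eq_bigr => y' _; rewrite sum_card.
  apply: (@le_trans _ _ (\sum_(y in Y) \sum_(y' in Y) ((y == y')%:R * P + K%:R))).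
    apply: ler_sum => y _; apply: ler_sum => y' _.
    case: (eqVneq y y') => [<-|ne]; last by rewrite mul0r add0r ler_nat hK.
    rewrite mul1r -[X in X <= _]addr0 lerD ?ler0n // ler_nat.
    by rewrite /P -cardsT subset_leq_card // subsetT.
  rewrite (eq_bigr (fun _ => P + l * K%:R)).
    by rewrite sumr_const -[_ *+ #|Y|]mulr_natl -/l mulrDr mulrA -expr2.
  move=> y yY; rewrite big_split /= sumr_const -mulr_suml -/l mulr_natl.
  rewrite (bigD1 y) //= eqxx big1 ?addr0 ?mul1r // => y' /andP[_ ne].
  by rewrite eq_sym (negbTE ne).
rewrite (eq_bigr (fun t => (\sum_(x in X) (Q * n x t - l)) ^+ 2)); last first.
  by move=> t _; rewrite -sa.
apply: (le_trans (_ : _ <= \sum_t k * \sum_x (Q * n x t - l) ^+ 2)).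
  apply: ler_sum => t _; apply: le_trans (CS _ _) _.
  rewrite -/k ler_wpM2l ?ler0n // [X in _ <= X](bigID (fun x => x \in X)) /= lerDl.
  by apply: sumr_ge0 => x _; apply: sqr_ge0.
rewrite -mulr_sumr ler_wpM2l ?ler0n // exchange_big /= (eq_bigr _ (fun x _ => sd x)).
rewrite big_split /= sumrN sumr_const -mulr_sumr -/P -mulr_natl mulrA lerB //.
rewrite mulr1 ler_wpM2l ?exprn_ge0 ?ler0n // (eq_bigr _ (fun x _ => se x)). exact: sf.
by rewrite -[_ *+ _]mulr_natl mulrA.
Qed.



Lemma dotBl (F : fieldType) (g g' y : 'rV[F]_2) : dot (g - g') y = dot g y - dot g' y.
Proof. by rewrite /dot !mxE !mulrBl opprD addrACA. Qed.

Lemma mx_neq0 (F : fieldType) (x : 'rV[F]_2) (M : 'M[F]_2) :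
  M \in unitmx -> x != 0 -> x *m M != 0.
Proof. by move=> Mu; apply: contra => /eqP h; rewrite -(mulmxK Mu x) h mul0mx. Qed.

Lemma hK_lemma (F : finFieldType) (M : 'M[F]_2) y y' : M \in unitmx -> y != y' ->
  (#|[set x | bilform M x y == bilform M x y']| <= #|F|)%N.
Proof.
move=> Mu ne.
have -> : [set x | bilform M x y == bilform M x y'] = [set x | dot ((y - y') *m M^T) x == 0].
  apply/setP => x; rewrite !inE !bilformE' mulmxBl dotBl subr_eq0 //.
apply: line_card; apply: mx_neq0; first by rewrite unitmx_tr.
by rewrite subr_eq0.
Qed.

Lemma fiber_le1 (F : finFieldType) (M N : 'M[F]_2) (x : 'rV[F]_2) (Y : {set 'rV[F]_2}) t :
  N \in unitmx -> t != 0 ->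
  (forall y, y \in Y -> bilform M x y = t -> det2 (x *m M) (y *m N) = 0) ->
  \sum_(y in Y) ((bilform M x y == t)%:R : rat) <= 1.
Proof.
move=> Nu tn0 hR.
case: (eqVneq (x *m M) 0) => hx.
  rewrite big1 ?ler01 // => y _; rewrite bilformE hx /dot !mxE !mul0r addr0.
  by rewrite eq_sym (negbTE tn0).
apply: (@le_trans _ _ (#|[set y | (dot (x *m M) y == t) && (dot (hh (x *m M) N) y == 0)]|%:R)).
  rewrite -sum_card big_mkcond /=; apply: ler_sum => y _.
  case: ifP => yY; last by case: (_ && _).
  case: eqP => //= e; by rewrite -bilformE e eqxx /= -det2_hh hR // eqxx.
have h1 := @le1 _ (x *m M) _ _ tn0 (hh_neq0 Nu hx); rewrite -(ler_nat rat) mulr1n in h1; exact: h1.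
Qed.

Lemma natfinal (B X Y q G : nat) : (B * (X * Y) ^ 2 <= 4 * (X * (q ^ 2 * (Y * q ^ 2))))%N ->
  (16 * q ^ 3 <= X * Y)%N -> (4 <= q)%N -> (q <= G + B + 1)%N -> (q <= 2 * G)%N.
Proof.
move=> h1 h2 h3 h4.
have q0 : (0 < q)%N by apply: leq_trans h3.
have hm : (0 < X * Y)%N by apply: leq_trans _ h2; rewrite muln_gt0 expn_gt0 q0.
have h5 : (B * (X * Y) <= 4 * q ^ 4)%N.
  rewrite -(leq_pmul2r hm).
  have -> : (B * (X * Y) * (X * Y) = B * (X * Y) ^ 2)%N by rewrite !expnS !expn0 !mulnE; ring.
  have -> : (4 * q ^ 4 * (X * Y) = 4 * (X * (q ^ 2 * (Y * q ^ 2))))%N by rewrite !expnS !expn0 !mulnE; ring.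
  exact: h1.
have h6 : (4 * B * (4 * q ^ 3) <= q * (4 * q ^ 3))%N.
  have -> : (4 * B * (4 * q ^ 3) = B * (16 * q ^ 3))%N by rewrite !expnS !expn0 !mulnE; ring.
  have -> : (q * (4 * q ^ 3) = 4 * q ^ 4)%N by rewrite !expnS !expn0 !mulnE; ring.
  by apply: leq_trans h5; rewrite leq_mul2l h2 orbT.
rewrite leq_pmul2r ?muln_gt0 ?expn_gt0 ?q0 // in h6.
move: h6 h3 h4; rewrite !mulnE !addnE => /ssrnat.leP h6 /ssrnat.leP h3 /ssrnat.leP h4; apply/ssrnat.leP. lia.
Qed.

Lemma L1 (F : finFieldType) (M N : 'M[F]_2) (X Y : {set 'rV[F]_2}) :
  M \in unitmx -> N \in unitmx ->
  (2 * #|F| <= #|Y|)%N -> (16 * #|F| ^ 3 <= #|X| * #|Y|)%N -> (4 <= #|F|)%N ->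
  (#|F| <= 2 * #|[set t | (t != 0%R) && [exists x in X, exists y in Y,
        (det2 (x *m M) (y *m N) != 0%R) && (bilform M x y == t)]]|)%N.
Proof.
move=> Mu Nu hl hkl hq.
set G := [set t | _].
set Bd := [set t : F | (t != 0) && (t \notin G)].
have hv := @variance rat _ _ _ (fun x y => bilform M x y) X Y #|F|
  (fun y y' ne => hK_lemma Mu ne).
move: hv; rewrite card_mx.
rewrite mul1n natrX.
set Q : rat := #|F|%:R; set k : rat := #|X|%:R; set l : rat := #|Y|%:R.
set nu := fun t => \sum_(x in X) \sum_(y in Y) ((bilform M x y == t)%:R : rat).
move=> hv.
have hv' : \sum_t (Q * nu t - k * l) ^+ 2 <= k * (Q ^+ 2 * (l * Q ^+ 2)).
  apply: le_trans hv _; rewrite le_eqVlt; apply/orP; left; apply/eqP; congr (_ * _).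
  by rewrite mulrDr [l ^+ 2 * Q]mulrC [Q ^+ 2 * (Q * _)]mulrA addrK.
have nuk t : t \in Bd -> nu t <= k.
  rewrite inE => /andP[tn0 tG]; rewrite /nu /k -sum1_card natr_sum.
  apply: ler_sum => x xX; apply: (fiber_le1 Nu tn0) => y yY e.
  apply/eqP; apply: contraR tG => hd; rewrite inE tn0 /=.
  apply/existsP; exists x; rewrite xX /=; apply/existsP; exists y.
  by rewrite yY hd /= e eqxx.
have hlq : 2 * Q <= l by rewrite /Q /l -natrM ler_nat.
have sq t : t \in Bd -> (k * l) ^+ 2 <= 4 * (Q * nu t - k * l) ^+ 2.
  move=> tB; have h1 := nuk t tB.
  have nu0 : 0 <= nu t by apply: sumr_ge0 => x _; apply: sumr_ge0 => y _; apply: ler0n.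
  have h3 : 2 * (Q * nu t) <= k * l.
    apply: (@le_trans _ _ (2 * Q * k)).
      by rewrite mulrA ler_wpM2l // mulr_ge0 ?ler0n.
    by rewrite mulrC ler_wpM2l ?ler0n.
  have h2 : k * l <= 2 * (k * l - Q * nu t).
    by rewrite mulrBr lerBrDr [2 * (k * l)]mulrDl mul1r lerD2l.
  rewrite -[(Q * nu t - k * l) ^+ 2]sqrrN opprB.
  have -> : 4 * (k * l - Q * nu t) ^+ 2 = (2 * (k * l - Q * nu t)) ^+ 2.
    by rewrite exprMn; congr (_ * _); rewrite expr2 -natrM.
  have kl0 : 0 <= k * l by rewrite mulr_ge0 ?ler0n.
  by rewrite ler_sqr // nnegrE // (le_trans kl0 h2).
have hB : #|Bd|%:R * (k * l) ^+ 2 <= 4 * (k * (Q ^+ 2 * (l * Q ^+ 2))).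
  apply: (@le_trans _ _ (\sum_(t in Bd) 4 * (Q * nu t - k * l) ^+ 2)).
    rewrite mulr_natl -sumr_const; apply: ler_sum => t tB; exact: sq.
  rewrite -mulr_sumr ler_wpM2l ?ler0n //; apply: le_trans hv'.
  rewrite [X in _ <= X](bigID (fun t => t \in Bd)) /= lerDl.
  by apply: sumr_ge0 => t _; apply: sqr_ge0.
move: hB; rewrite /Q /k /l -!natrX -!natrM -natrX -natrM ler_nat => hB.
apply: (natfinal hB hkl hq).
have hc := cardsC G; rewrite -hc -addnA leq_add2l.
have sub : ~: G \subset Bd :|: [set 0].
  apply/subsetP => t; rewrite in_setC => tG; rewrite in_setU in_set1.
  case: (eqVneq t 0) => [->|tn0]; first by rewrite orbT.
  by rewrite /Bd inE tn0 tG.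
apply: leq_trans (subset_leq_card sub) _.
by rewrite cardsU cards1 leq_subr.
Qed.




Lemma count_lemma (F : finFieldType) (G : {set F}) (D : F -> {set 'rV[F]_2})
  (f : F -> 'rV[F]_2 -> F * F * F) (T : {set F * F * F}) (m : nat) :
  (forall t, t \in G -> (m <= #|D t|)%N) ->
  (forall t z, t \in G -> z \in D t -> f t z \in T) ->
  (forall t t' z z', t \in G -> t' \in G -> z \in D t -> z' \in D t' ->
       f t z = f t' z' -> (t, z) = (t', z')) ->
  (#|G| * m <= #|T|)%N.
Proof.
move=> hm hT hinj.
pose P := [set p : F * 'rV[F]_2 | (p.1 \in G) && (p.2 \in D p.1)].
have cP : #|P| = (\sum_t \sum_z ((t \in G) && (z \in D t) : nat))%N.
  rewrite -sum1_card pair_big /= big_mkcond /=; apply: eq_bigr => p _.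
  by rewrite inE; case: (_ && _).
have h1 : (#|G| * m <= #|P|)%N.
  rewrite cP -sum_nat_const big_mkcond /=; apply: leq_sum => t _.
  case: ifP => tG //=; apply: leq_trans (hm t tG) _.
  by rewrite -sum1_card big_mkcond /=; apply: eq_leq; apply: eq_bigr => z _; case: (z \in D t).
apply: leq_trans h1 _.
rewrite -(@card_in_imset _ _ (fun p => f p.1 p.2) P).
  apply: subset_leq_card; apply/subsetP => l /imsetP [p]; rewrite inE => /andP[p1 p2] ->.
  exact: hT.
move=> [t z] [t' z']; rewrite !inE /= => /andP[tG zD] /andP[tG' zD'].
exact: hinj.
Qed.

Lemma det2_g (F : fieldType) (g h : 'rV[F]_2) : det2 g h != 0 -> g != 0.
Proof. by apply: contra => /eqP ->; rewrite /det2 !mxE !mul0r subrr. Qed.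

Lemma det2_h (F : fieldType) (g h : 'rV[F]_2) : det2 g h != 0 -> h != 0.
Proof. by apply: contra => /eqP ->; rewrite /det2 !mxE !mulr0 subrr. Qed.

Lemma count2 (F : finFieldType) (G : {set F}) (g h : F -> 'rV[F]_2) (Z : {set 'rV[F]_2})
  (f : F -> 'rV[F]_2 -> F * F * F) (T : {set F * F * F}) (proj : F * F * F -> F) :
  (forall t, t \in G -> det2 (g t) (h t) != 0) ->
  (forall t z, t \in G -> z \in Z -> dot (g t) z != 0 -> dot (h t) z != 0 -> f t z \in T) ->
  (forall t z, proj (f t z) = t) ->
  (forall t z z', f t z = f t z' -> dot (g t) z = dot (g t) z' /\ dot (h t) z = dot (h t) z') ->
  (#|G| * (#|Z| - 2 * #|F|) <= #|T|)%N.
Proof.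
move=> hd hT hp hi.
apply: (@count_lemma _ G (fun t => [set z in Z | (dot (g t) z != 0) && (dot (h t) z != 0)]) f).
- move=> t tG; rewrite leq_subLR.
  have sub : Z \subset [set z in Z | (dot (g t) z != 0) && (dot (h t) z != 0)]
       :|: ([set z | dot (g t) z == 0] :|: [set z | dot (h t) z == 0]).
    apply/subsetP => z zZ; rewrite !inE zZ /=.
    by case: (dot (g t) z == 0); case: (dot (h t) z == 0).
  apply: leq_trans (subset_leq_card sub) _.
  apply: leq_trans (leq_card_setU _ _) _; rewrite addnC leq_add2r mul2n -addnn.
  apply: leq_trans (leq_card_setU _ _) _; apply: leq_add; apply: line_card.
    exact: det2_g (hd t tG).
  exact: det2_h (hd t tG).
- by move=> t z tG; rewrite inE => /andP[zZ /andP[h1 h2]]; apply: hT.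
- move=> t t' z z' tG tG' _ _ e.
  have tt : t = t' by rewrite -(hp t z) -(hp t' z') e.
  subst t'; have [e1 e2] := hi _ _ _ e.
  congr (_, _); apply/eqP; rewrite -subr_eq0; apply/eqP; apply: (inj2 (hd t tG)).
    by rewrite dotB e1 subrr.
  by rewrite dotB e2 subrr.
Qed.



Lemma natfinal2 (T G1 q C : nat) :
  (G1 * (C - 2 * q) <= T)%N -> (q <= 2 * G1)%N -> (4 * q <= C)%N -> (q * C <= 4 * T)%N.
Proof.
move=> h1 h2 h3.
apply: (@leq_trans (q * (2 * (C - 2 * q)))).
  rewrite leq_mul2l; apply/orP; right.
  move: h3; rewrite !mulnE subnE => /ssrnat.leP h3; apply/ssrnat.leP; lia.
apply: (@leq_trans (2 * G1 * (2 * (C - 2 * q)))); first by rewrite leq_mul2r h2 orbT.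
have -> : (2 * G1 * (2 * (C - 2 * q)) = 4 * (G1 * (C - 2 * q)))%N.
  by rewrite !mulnE; ring.
by rewrite leq_mul2l h1 orbT.
Qed.

Definition wit (F : finFieldType) (M N : 'M[F]_2) (X Y : {set 'rV[F]_2}) (t : F) :=
  odflt (0, 0) [pick ab : 'rV[F]_2 * 'rV[F]_2 | (ab.1 \in X) && (ab.2 \in Y) &&
     (det2 (ab.1 *m M) (ab.2 *m N) != 0) && (bilform M ab.1 ab.2 == t)].

Lemma witP (F : finFieldType) (M N : 'M[F]_2) (X Y : {set 'rV[F]_2}) (t : F) :
  t \in [set t | (t != 0%R) && [exists x in X, exists y in Y,
        (det2 (x *m M) (y *m N) != 0%R) && (bilform M x y == t)]] ->
  [/\ t != 0, (wit M N X Y t).1 \in X, (wit M N X Y t).2 \in Y,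
      det2 ((wit M N X Y t).1 *m M) ((wit M N X Y t).2 *m N) != 0 &
      bilform M (wit M N X Y t).1 (wit M N X Y t).2 = t].
Proof.
rewrite inE => /andP[tn0 /existsP[x /andP[xX /existsP[y /andP[yY /andP[hd he]]]]]].
rewrite /wit; case: pickP => [[a b] /= /andP[/andP[/andP[aX bY] hd'] /eqP he']|none] /=.
  by split.
by move: (none (x, y)); rewrite /= xX yY hd he.
Qed.

Definition Gset (F : finFieldType) (M N : 'M[F]_2) (X Y : {set 'rV[F]_2}) : {set F} :=
  [set t | (t != 0%R) && [exists x in X, exists y in Y,
        (det2 (x *m M) (y *m N) != 0%R) && (bilform M x y == t)]].

Theorem theorem1p3 :
  exists Cst c : algC, 0 < Cst /\ 0 < c /\
  forall (F : finFieldType) (M : 'M[F]_2) (A B C : {set 'rV[F]_2}),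
    bilform_nondeg M ->
    let q : algC := (#|F|)%:R in
    Cst * (q * sqrtC q) <= (#|A|)%:R ->
    Cst * (q * sqrtC q) <= (#|B|)%:R ->
    Cst * (q * sqrtC q) <= (#|C|)%:R ->
    c * (sqrtC ((#|B| * #|C|)%:R) / q ^+ 2) * q ^+ 3
      <= (#|solvable_triples M A B C|)%:R.
Proof.
exists 4, (1 / 4); split; first by rewrite ltr0n.
split; first by rewrite mul1r invr_gt0 ltr0n.
move=> F M A B C Mu q hA hB hC.
rewrite /bilform_nondeg in Mu.
have nq0 : (0 < #|F|)%N by apply/card_gt0P; exists 0.
have q0 : 0 < q by rewrite ltr0n.
set s := sqrtC q.
have s1 : 1 <= s.
  by rewrite -sqrtC1 ler_sqrtC ?nnegrE ?ler01 ?(ltW q0) // /q ler1n.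
have s0 : 0 <= s by apply: le_trans s1; apply: ler01.
have ss : s * s = q by rewrite -expr2 sqrtCK.
have h4 : forall X : {set 'rV[F]_2}, 4 * (q * s) <= #|X|%:R -> (4 * #|F| <= #|X|)%N.
  move=> X hX; rewrite -(ler_nat algC) natrM; apply: le_trans hX.
  apply: ler_wpM2l; first exact: ler0n.
  by rewrite -/q -{1}(mulr1 q) ler_wpM2l // ltW.
have h16 : forall X Y : {set 'rV[F]_2}, 4 * (q * s) <= #|X|%:R -> 4 * (q * s) <= #|Y|%:R ->
    (16 * #|F| ^ 3 <= #|X| * #|Y|)%N.
  move=> X Y hX hY; rewrite -(ler_nat algC).
  have e : (16 * #|F| ^ 3)%:R = (4 * (q * s)) * (4 * (q * s)) :> algC.
    rewrite mulrACA [(q * s) * _]mulrACA ss natrM natrX -natrM.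
    by rewrite -/q !exprS expr0 mulr1 !mulrA.
  have qs0 : 0 <= 4 * (q * s) by rewrite mulr_ge0 ?mulr_ge0 // ltW.
  by rewrite e natrM; apply: ler_pM.
have cA := h4 _ hA; have cB := h4 _ hB; have cC := h4 _ hC.
have hq : (4 <= #|F|)%N.
  have := max_card A; rewrite card_mx mul1n => hAm.
  rewrite -(leq_pmul2r nq0); apply: leq_trans cA _; apply: leq_trans hAm _.
  by rewrite expnS expn1.
have two : forall X : {set 'rV[F]_2}, (4 * #|F| <= #|X|)%N -> (2 * #|F| <= #|X|)%N.
  by move=> X hX; apply: leq_trans hX; rewrite leq_mul2r orbT.
have MTu : M^T \in unitmx by rewrite unitmx_tr.
have g1 : (#|F| <= 2 * #|Gset M M A B|)%N := L1 Mu Mu (two _ cB) (h16 _ _ hA hB) hq.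
have g2 : (#|F| <= 2 * #|Gset M M^T A C|)%N := L1 Mu MTu (two _ cC) (h16 _ _ hA hC) hq.
have c1 : (#|Gset M M A B| * (#|C| - 2 * #|F|) <= #|solvable_triples M A B C|)%N.
  apply: (@count2 _ (Gset M M A B) (fun t => (wit M M A B t).1 *m M)
     (fun t => (wit M M A B t).2 *m M) C
     (fun t c => (t, dot ((wit M M A B t).1 *m M) c, dot ((wit M M A B t).2 *m M) c))
     _ (fun l => l.1.1)).
  - by move=> t /witP [_ _ _ hd _].
  - move=> t c /witP [tn0 aX bY _ he] cC' h1 h2.
    rewrite /solvable_triples inE /= tn0 h1 h2 /=.
    apply/existsP; exists (wit M M A B t).1; rewrite aX /=.
    apply/existsP; exists (wit M M A B t).2; rewrite bY /=.
    apply/existsP; exists c; rewrite cC' /= he !bilformE !eqxx.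
    done.
  - by [].
  - by move=> t z z' [e1 e2].
have c2 : (#|Gset M M^T A C| * (#|B| - 2 * #|F|) <= #|solvable_triples M A B C|)%N.
  apply: (@count2 _ (Gset M M^T A C) (fun t => (wit M M^T A C t).1 *m M)
     (fun t => (wit M M^T A C t).2 *m M^T) B
     (fun t b => (dot ((wit M M^T A C t).1 *m M) b, t, dot ((wit M M^T A C t).2 *m M^T) b))
     _ (fun l => l.1.2)).
  - by move=> t /witP [_ _ _ hd _].
  - move=> t b /witP [tn0 aX cC' _ he] bB h1 h2.
    rewrite /solvable_triples inE /= tn0 h1 h2 /=.
    apply/existsP; exists (wit M M^T A C t).1; rewrite aX /=.
    apply/existsP; exists b; rewrite bB /=.
    apply/existsP; exists (wit M M^T A C t).2; rewrite cC' /= he bilformE.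
    by rewrite [bilform M b _]bilformE' !eqxx.
  - by [].
  - by move=> t z z' [e1 e2].
have hTC := natfinal2 c1 g1 cC.
have hTB := natfinal2 c2 g2 cB.
set T := #|solvable_triples M A B C|.
set x := sqrtC ((#|B| * #|C|)%:R).
have qn0 : q ^+ 2 != 0 by rewrite expf_neq0 // gt_eqF.
have eL : 1 / 4 * (x / q ^+ 2) * q ^+ 3 = (x * q) / 4.
  have -> : q ^+ 3 = q ^+ 2 * q by rewrite exprSr.
  rewrite mulrA -[1 / 4 * (x / q ^+ 2) * q ^+ 2]mulrA divfK //.
  by rewrite mul1r (mulrC _ x) mulrAC.
rewrite eL ler_pdivrMr ?ltr0n //.
have qle : 0 <= q by apply: ltW.
have x0 : 0 <= x by rewrite sqrtC_ge0 ler0n.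
have -> : x * q = sqrtC ((#|B| * #|C|)%:R * q ^+ 2).
  by rewrite sqrtCM ?nnegrE ?ler0n ?exprn_ge0 // sqrCK.
have T0 : 0 <= T%:R * 4 :> algC by rewrite mulr_ge0 ?ler0n.
rewrite -[T%:R * 4](sqrCK T0) ler_sqrtC ?nnegrE ?mulr_ge0 ?exprn_ge0 ?ler0n //.
rewrite /q -natrX -!natrM -natrX ler_nat.
have -> : (#|B| * #|C| * #|F| ^ 2 = (#|F| * #|B|) * (#|F| * #|C|))%N.
  by rewrite !expnS !expn0 !mulnE; ring.
have -> : ((T * 4) ^ 2 = (4 * T) * (4 * T))%N.
  by rewrite !expnS !expn0 !mulnE; ring.
exact: leq_mul.
Qed.
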